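(* Let $G=(V,E)$ be a finite simple undirected graph, $k\ge1$ an integer, $S\subseteq V$ a $k$-plex, and $C\subseteq V$ with $C\cap S=\emptyset$. Let $v\in C$. Initialize $\mathrm{sup}(w)=k-|\overline{N}_w(S)|$ for each $w\in S$ and $D=N(v)\cap C$. Process the vertices $u\in N(v)\cap C$ one at a time in an arbitrary order; when processing $u$: if $\overline{N}_u(S)=\emptyset$, keep $u$ in $D$; otherwise choose $w\in\overline{N}_u(S)$ with $\mathrm{sup}(w)\le \mathrm{sup}(w')$ for all $w'\in\overline{N}_u(S)$ (ties broken arbitrarily), and if $\mathrm{sup}(w)>0$ decrease $\mathrm{sup}(w)$ by $1$ (keeping $u$ in $D$), while if $\mathrm{sup}(w)\le 0$ remove $u$ from $D$. Let $D$ be the resulting set after all vertices have been processed. Then every $k$-plex $S'$ with $S\cup\{v\}\subseteq S'\subseteq S\cup C$ satisfies $$|S'|\le |S|+k-|\overline{N}_v(S)|+|D|.$$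
   Context: $N(x)$ denotes the set of neighbors of $x$ in $G$ ($x\notin N(x)$). For $x\in V$ and $T\subseteq V$, $\overline{N}_x(T)=T\setminus N(x)$ is the set of non-neighbors of $x$ in $T$; if $x\in T$ then $x\in\overline{N}_x(T)$. A set $T\subseteq V$ is a $k$-plex if every vertex $u\in T$ satisfies $|N(u)\cap T|\ge |T|-k$ (equivalently $|\overline{N}_u(T)|\le k$). *)

(* Defs.v *)
From mathcomp Require Import all_boot all_order all_algebra.
Set Implicit Arguments. Unset Strict Implicit. Unset Printing Implicit Defensive.
Import Order.TTheory GRing.Theory Num.Theory.

Definition simple_graph (T : finType) (e : rel T) : Prop :=
  symmetric e /\ irreflexive e.

Definition nbhd (T : finType) (e : rel T) (x : T) : {set T} := [set y | e x y].

Definition nonnbhd (T : finType) (e : rel T) (x : T) (A : {set T}) : {set T} :=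
  A :\: nbhd e x.

(* A is a k-plex: every u in A has at most k non-neighbours in A (u included). *)
Definition kplex (T : finType) (e : rel T) (k : nat) (A : {set T}) : Prop :=
  forall u, u \in A -> #|nonnbhd e u A| <= k.

Definition sup_dec (T : finType) (sup : T -> int) (w : T) : T -> int :=
  fun x => if x == w then (sup x - 1)%R else sup x.

(* greedy_run e S sup D us sup' D' : processing the vertices of the list us in
   order, starting from state (sup, D), can end in state (sup', D'), where each
   step follows the rule of the paper; ties in the choice of w are arbitrary
   (any minimiser may be chosen), which is why this is a relation. *)
Inductive greedy_run (T : finType) (e : rel T) (S : {set T})
  : (T -> int) -> {set T} -> seq T -> (T -> int) -> {set T} -> Prop :=
| run_nil sup D : greedy_run e S sup D [::] sup D
| run_empty sup D u us sup' D' :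
    nonnbhd e u S = set0 ->
    greedy_run e S sup D us sup' D' ->
    greedy_run e S sup D (u :: us) sup' D'
| run_dec sup D u us w sup' D' :
    w \in nonnbhd e u S ->
    (forall w', w' \in nonnbhd e u S -> (sup w <= sup w')%R) ->
    (0 < sup w)%R ->
    greedy_run e S (sup_dec sup w) D us sup' D' ->
    greedy_run e S sup D (u :: us) sup' D'
| run_remove sup D u us w sup' D' :
    w \in nonnbhd e u S ->
    (forall w', w' \in nonnbhd e u S -> (sup w <= sup w')%R) ->
    (sup w <= 0)%R ->
    greedy_run e S sup (D :\ u) us sup' D' ->
    greedy_run e S sup D (u :: us) sup' D'.

Definition sup_init (T : finType) (e : rel T) (k : nat) (S : {set T}) : T -> int :=
  fun w => (k%:Z - (#|nonnbhd e w S|)%:Z)%R.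

(* Main.v *)
Require Import Defs.
From mathcomp Require Import all_boot all_order all_algebra.
From mathcomp Require Import zify.
Import Order.TTheory GRing.Theory Num.Theory.
Set Implicit Arguments. Unset Strict Implicit. Unset Printing Implicit Defensive.

Definition cnt (T : finType) (e : rel T) (S A : {set T}) (w : T) :=
  #|[set u in A | w \in nonnbhd e u S]|.

Lemma cnt_sub (T : finType) (e : rel T) (S A B : {set T}) w :
  A \subset B -> cnt e S A w <= cnt e S B w.
Proof.
move=> h; apply: subset_leq_card; apply/subsetP=> x; rewrite !inE.
by case/andP=> /(subsetP h) -> ->.
Qed.

Lemma cnt_D1 (T : finType) (e : rel T) (S A : {set T}) u w :
  u \in A -> w \in nonnbhd e u S -> cnt e S A w = (cnt e S (A :\ u) w).+1.
Proof.
move=> Au Hw; rewrite /cnt (cardsD1 u) inE Au Hw /=; congr _.+1.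
by apply: eq_card => x; rewrite !inE andbA.
Qed.

Lemma run_keep (T : finType) (e : rel T) S sup D us sup' D' :
  greedy_run e S sup D us sup' D' -> forall x, x \notin us -> (x \in D') = (x \in D).
Proof.
elim=> //.
- by move=> ? ? u ? ? ? _ _ IH x; rewrite inE negb_or => /andP[_ /IH].
- by move=> ? ? u ? ? ? ? _ _ _ _ IH x; rewrite inE negb_or => /andP[_ /IH].
- move=> ? ? u ? ? ? ? _ _ _ _ IH x; rewrite inE negb_or => /andP[xu /IH ->].
  by rewrite !inE xu.
Qed.

Lemma card_cons (T : finType) (D' : {set T}) u (us : seq T) :
  u \in D' -> u \notin us ->
  #|D' :&: [set x in u :: us]| = (#|D' :&: [set x in us]|).+1.
Proof.
move=> uD uus.
have -> : D' :&: [set x in u :: us] = u |: (D' :&: [set x in us]).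
  apply/setP=> x; rewrite !inE; case: (eqVneq x u) => [->|] //=.
  by rewrite uD.
by rewrite cardsU1 !inE (negbTE uus) andbF.
Qed.

Lemma card_mono (T : finType) (D' : {set T}) u (us : seq T) :
  #|D' :&: [set x in us]| <= #|D' :&: [set x in u :: us]|.
Proof.
apply: subset_leq_card; apply/subsetP=> x; rewrite !inE.
by case/andP=> -> ->; rewrite orbT.
Qed.

Lemma run_bound (T : finType) (e : rel T) S sup D us sup' D' :
  greedy_run e S sup D us sup' D' -> uniq us -> {subset us <= D} ->
  forall A : {set T}, (forall x, x \in A -> x \in us) ->
  (forall w, w \in S -> ((cnt e S A w)%:Z <= sup w)%R) ->
  #|A| <= #|D' :&: [set x in us]|.
Proof.
elim=> {sup D us sup' D'}.
- move=> sup D _ _ A HA _.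
  have -> : A = set0 by apply/setP=> x; rewrite inE; apply/negbTE/negP => /HA.
  by rewrite cards0.
- move=> sup D u us sup' D' He Hr IH /andP[uus Hu] HD A HA Hc.
  have uD' : u \in D' by rewrite (run_keep Hr uus) HD // inE eqxx.
  rewrite card_cons //.
  have := IH Hu (fun x hx => HD x (mem_behead (s:=u::us) hx)) (A :\ u).
  have h1 : #|A| <= (#|A :\ u|).+1 by rewrite (cardsD1 u A); case: (u \in A).
  move=> H; apply: (leq_trans h1); rewrite ltnS; apply: H.
    move=> x; rewrite !inE => /andP[xu /HA]; rewrite inE (negbTE xu) //.
  move=> w wS; apply: le_trans (Hc w wS); rewrite lez_nat; apply: cnt_sub.
  exact: subsetDl.
- move=> sup D u us w sup' D' Hw Hmin Hpos Hr IH /andP[uus Hu] HD A HA Hc.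
  have uD' : u \in D' by rewrite (run_keep Hr uus) HD // inE eqxx.
  rewrite card_cons //.
  have key : forall A'' : {set T}, A'' \subset A -> (forall x, x \in A'' -> x \in us) ->
      #|A| <= (#|A''|).+1 -> ((cnt e S A'' w)%:Z <= sup w - 1)%R ->
      #|A| <= (#|D' :&: [set x in us]|).+1.
    move=> A'' sub HA'' hc hw; apply: (leq_trans hc); rewrite ltnS.
    apply: IH => //; first by move=> x hx; apply: HD; rewrite inE hx orbT.
    move=> w' w'S; rewrite /sup_dec; case: eqP => [->|_] //.
    apply: le_trans (Hc w' w'S); rewrite lez_nat; exact: cnt_sub.
  set B := [set x in A | w \in nonnbhd e x S].
  case: (set_0Vmem B) => [B0|[u0 u0B]].
  + have uA : u \notin A.
      apply/negP=> uA; have : u \in B by rewrite inE uA Hw.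
      by rewrite B0 inE.
    apply: (key A) => //.
    * move=> x xA; move: (HA x xA); rewrite inE; case: eqP => // xu.
      by move: xA; rewrite xu (negbTE uA).
    * have : cnt e S A w = 0 by rewrite /cnt -/B B0 cards0.
      move=> ->; lia.
  + set u' := if u \in A then u else u0.
    have u'B : u' \in B by rewrite /u'; case: ifP => // uA; rewrite inE uA Hw.
    move: (u'B); rewrite inE => /andP[u'A Hw'].
    apply: (key (A :\ u')).
    * exact: subsetDl.
    * move=> x; rewrite !inE => /andP[xu' xA]; move: (HA x xA); rewrite inE.
      case: eqP => // xu; move: xu' xA; rewrite xu /u'; case: ifP => //; by rewrite eqxx.
    * by rewrite (cardsD1 u' A) u'A.
    * have := Hc w (subsetP (subsetDl _ _) w Hw).
      rewrite (cnt_D1 u'A Hw'); lia.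
- move=> sup D u us w sup' D' Hw Hmin Hneg Hr IH /andP[uus Hu] HD A HA Hc.
  apply: leq_trans (card_mono _ _ _).
  have uA : u \notin A.
    apply/negP=> uA; have := Hc w (subsetP (subsetDl _ _) w Hw).
    rewrite (cnt_D1 uA Hw); lia.
  apply: IH => //.
  + move=> x hx; rewrite !inE (HD x); last by rewrite inE hx orbT.
    by rewrite andbT; apply/eqP=> xu; move: uus; rewrite -xu hx.
  + move=> x xA; move: (HA x xA); rewrite inE; case: eqP => // xu.
    by move: xA; rewrite xu (negbTE uA).
Qed.

Theorem lemma6 (T : finType) (e : rel T) (k : nat) (S C : {set T}) (v : T)
  (ord : seq T) (supf : T -> int) (D : {set T}) :
  simple_graph e ->
  1 <= k ->
  kplex e k S ->
  C :&: S = set0 ->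
  v \in C ->
  uniq ord ->
  (forall x, (x \in ord) = (x \in nbhd e v :&: C)) ->
  greedy_run e S (sup_init e k S) (nbhd e v :&: C) ord supf D ->
  forall S' : {set T},
    kplex e k S' -> v |: S \subset S' -> S' \subset S :|: C ->
    ((#|S'|)%:Z <= (#|S|)%:Z + k%:Z - (#|nonnbhd e v S|)%:Z + (#|D|)%:Z)%R.
Proof.
move=> [esym eirr] _ kS CS vC uord Hord Hrun S' kS' sub1 sub2.
have SS' : S \subset S' by apply: subset_trans sub1; exact: subsetU1.
have vS' : v \in S' by apply: (subsetP sub1); rewrite !inE eqxx.
set A := S' :&: (nbhd e v :&: C).
have hA : #|A| <= #|D|.
  apply: leq_trans (run_bound Hrun uord _ _ _) _.
  - by move=> x; rewrite Hord.
  - by move=> x; rewrite inE Hord => /andP[].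
  - move=> w wS; rewrite /sup_init.
    have wS' : w \in S' by apply: (subsetP SS').
    have h1 := kS' w wS'.
    have h2 : #|nonnbhd e w S| + cnt e S A w <= #|nonnbhd e w S'|.
      rewrite /cnt -cardsUI.
      have -> : nonnbhd e w S :&: [set u in A | w \in nonnbhd e u S] = set0.
        apply/setP=> x; rewrite !inE; apply/negbTE; apply/negP.
        case/andP=> /andP[_ xS] /and3P[/andP[_ /andP[_ xC]] _ _].
        by move/setP: CS => /(_ x); rewrite !inE xC xS.
      rewrite cards0 addn0; apply: subset_leq_card; apply/subsetP=> x.
      rewrite !inE; case/orP.
        by case/andP=> -> /(subsetP SS') ->.
      by case/and3P=> /and3P[-> _ _]; rewrite esym => ->.
    lia.
  - by apply: subset_leq_card; exact: subsetIl.
have h3 : #|S'| = #|S' :&: nbhd e v| + #|nonnbhd e v S'| by rewrite cardsID.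
have h4 := kS' v vS'.
have h5 : #|S| = #|S :&: nbhd e v| + #|nonnbhd e v S| by rewrite cardsID.
have h6 : #|S' :&: nbhd e v| <= #|S :&: nbhd e v| + #|A|.
  rewrite -cardsUI; apply: leq_trans (leq_addr _ _).
  apply: subset_leq_card; apply/subsetP=> x; rewrite !inE => /andP[xS' xv].
  have := subsetP sub2 x xS'; rewrite !inE => /orP[->|->].
    by rewrite xv.
  by rewrite xS' xv orbT.
lia.
Qed.
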